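(* Let $K$ be a positive integer, let $J$ be a positive integer or $\infty$, and write $[J]=\{1,\dots,J\}$ (with $[J]=\mathbb{Z}_+$ if $J=\infty$). Let $Q=[Q_1,\dots,Q_K]$ with $Q_k:[J]\to\{0,1\}$ and $A=[A_1,\dots,A_K]$ with $A_k:[J]\to\mathbb{R}$, and assume: (2) for every $S\subset\{1,\dots,K\}$ with $\mathcal{R}(S)$ non-empty, the columns of $A_{[\mathcal{R}(S),S]}$ are linearly independent; and (3) for every $l$, $A_l(j)=0$ whenever $Q_l(j)=0$. Suppose $k'$ masks $k\neq k'$, and let $\epsilon\in\mathbb{R}$. Then the matrix $\widetilde A=[A_1,\dots,A_{k-1},A_k+\epsilon A_{k'},A_{k+1},\dots,A_K]$ also satisfies conditions (2) and (3) (with the same $Q$).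
   Context: $\operatorname{supp}(Q_l)=\{j: Q_l(j)=1\}$. For $S\subset\{1,\dots,K\}$, $\mathcal{R}(S)\subset[J]$ is the set of indices $j$ such that $Q_l(j)=1$ for all $l\in S$ and $Q_l(j)=0$ for all $l\notin S$. $A_{[\mathcal{R},S]}$ denotes the submatrix of $A$ with rows in $\mathcal{R}$ and columns in $S$. We say $k'$ masks $k$ if $\operatorname{supp}(Q_{k'})\subset\operatorname{supp}(Q_k)$. *)

(* Defs.v *)
From HB Require Import structures.
From mathcomp Require Import all_boot all_order all_algebra.
From mathcomp Require Export reals.
Set Implicit Arguments. Unset Strict Implicit. Unset Printing Implicit Defensive.
Import Order.TTheory GRing.Theory Num.Theory.
Local Open Scope ring_scope.

(* Rows: J : option nat, with None standing for J = infinity.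
   The row index set [J] = {1,...,J} (or Z_+ if J = infinity), as a predicate on nat. *)
Definition in_rows (J : option nat) (j : nat) : bool :=
  (0 < j)%N && (if J is Some n then (j <= n)%N else true).

(* Columns are indexed by 'I_K (l : 'I_K stands for the column l+1).
   Q l j and A l j are the j-th entries of Q_l and A_l. *)

Definition rowsR (K : nat) (J : option nat) (Q : 'I_K -> nat -> bool)
  (S : {set 'I_K}) (j : nat) : bool :=
  in_rows J j && [forall l, Q l j == (l \in S)].

Definition cond2 (R : realType) (K : nat) (J : option nat)
  (Q : 'I_K -> nat -> bool) (A : 'I_K -> nat -> R) : Prop :=
  forall S : {set 'I_K}, (exists j, rowsR J Q S j) ->
    forall c : 'I_K -> R,
      (forall j, rowsR J Q S j -> \sum_(l in S) c l * A l j = 0) ->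
      forall l, l \in S -> c l = 0.

Definition cond3 (R : realType) (K : nat) (J : option nat)
  (Q : 'I_K -> nat -> bool) (A : 'I_K -> nat -> R) : Prop :=
  forall (l : 'I_K) (j : nat), in_rows J j -> Q l j = false -> A l j = 0.

Definition masks (K : nat) (J : option nat) (Q : 'I_K -> nat -> bool)
  (k' k : 'I_K) : Prop :=
  forall j, in_rows J j -> Q k' j -> Q k j.

Definition Atilde (R : realType) (K : nat) (A : 'I_K -> nat -> R)
  (k k' : 'I_K) (eps : R) : 'I_K -> nat -> R :=
  fun l j => if l == k then A k j + eps * A k' j else A l j.

(* Main.v *)
Require Import Defs.
From mathcomp Require Import all_boot all_order all_algebra reals.
Import Order.TTheory GRing.Theory Num.Theory.
Local Open Scope ring_scope.

Lemma sum_ifeq (R : realType) (K : nat) (S : {set 'I_K}) (k : 'I_K) (F : 'I_K -> R) :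
  \sum_(l in S) (if l == k then F l else 0) = if k \in S then F k else 0.
Proof.
rewrite -big_mkcondr /=.
case: ifP => kS.
  rewrite (eq_bigl (fun l => l == k)); first by rewrite big_pred1_eq.
  by move=> l /=; case: (l =P k) => [->|]; rewrite ?kS ?andbF.
rewrite big_pred0 // => l; case: eqP => [->|]; [by rewrite kS | by rewrite andbF].
Qed.

Theorem lemma2 (R : realType) (K : nat) (J : option nat)
  (HK : (0 < K)%N) (HJ : forall n, J = Some n -> (0 < n)%N)
  (Q : 'I_K -> nat -> bool) (A : 'I_K -> nat -> R)
  (H2 : cond2 J Q A) (H3 : cond3 J Q A)
  (k k' : 'I_K) (Hkk' : k != k') (Hmask : masks J Q k' k) (eps : R) :
  cond2 J Q (Atilde A k k' eps) /\ cond3 J Q (Atilde A k k' eps).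
Proof.
split; last first.
  move=> l j Hj Hq; rewrite /Atilde; case: (l =P k) => [El|_]; last exact: H3.
  have Hk : Q k j = false by rewrite -El.
  have Hk' : Q k' j = false.
    by apply/negbTE/negP => /(Hmask _ Hj); rewrite Hk.
  by rewrite (H3 _ _ Hj Hk) (H3 _ _ Hj Hk') mulr0 addr0.
move=> S Sne c Hc.
pose d l := c l + (if (l == k') && (k \in S) then c k * eps else 0).
have Hd : forall j, rowsR J Q S j -> \sum_(l in S) d l * A l j = 0.
  move=> j Hj; rewrite -[RHS](Hc j Hj).
  have Ak' : k' \notin S -> A k' j = 0.
    move=> nS; move: Hj => /andP [Hr /forallP /(_ k') /eqP Hq].
    by apply: H3 => //; rewrite Hq (negbTE nS).
  transitivity (\sum_(l in S) c l * A l j +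
      \sum_(l in S) (if l == k' then (if k \in S then c k * eps else 0) * A l j else 0)).
    rewrite -big_split /=; apply: eq_bigr => l _; rewrite /d.
    by case: (l == k'); case: (k \in S); rewrite ?mulrDl ?mul0r ?addr0.
  transitivity (\sum_(l in S) c l * A l j +
      \sum_(l in S) (if l == k then c l * (eps * A k' j) else 0)); last first.
    rewrite -big_split /=; apply: eq_bigr => l _; rewrite /Atilde.
    by case: (l =P k) => [->|]; rewrite ?eqxx ?mulrDr ?addr0.
  congr (_ + _); rewrite !sum_ifeq.
  case kS: (k \in S); case k'S: (k' \in S); rewrite ?mulrA //.
  - by rewrite Ak' ?k'S // mulr0.
  - by rewrite mul0r.
have H0 := H2 S Sne d Hd.
have ck : k \in S -> c k = 0.
  move=> kS; have := H0 k kS; rewrite /d.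
  by rewrite (negbTE Hkk') /= addr0.
move=> l lS; have := H0 l lS; rewrite /d.
case kS: (k \in S); last by rewrite andbF addr0.
by rewrite ck // mul0r; case: (_ && _); rewrite addr0.
Qed.
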